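(* Let $X$ be a $G$-space such that the orbit map $\rho_X\colon X\to X/G$ admits a strict section, i.e. a continuous $s\colon X/G\to X$ with $\rho_X\circ s=\mathrm{id}_{X/G}$. Then (1) $\mathrm{cat}^{G,\infty}(X)=\mathrm{cat}(X/G)$, and (2) $\mathrm{TC}^{G,\infty}(X)=\mathrm{TC}(X/G)$.
   Context: All spaces are well-pointed CW complexes, $G$ a topological group acting cellularly; $x_0\in X$ is the base point. $\mathrm{cat}$ and $\mathrm{TC}$ denote the reduced Lusternik–Schnirelmann category and reduced topological complexity. $PX$ is the path space; $\mathcal{P}_k(X)=\{(\gamma_1,\dots,\gamma_k)\in(PX)^k\mid G\gamma_i(1)=G\gamma_{i+1}(0),\ 1\le i\le k-1\}$, $\pi_k(\gamma_1,\dots,\gamma_k)=(\gamma_1(0),\gamma_k(1))\in X\times X$. $\mathrm{secat}$ is reduced sectional category (least $n$ such that the base is covered by $n+1$ open sets each admitting a homotopy section). $\mathrm{TC}^{G,k}(X)=\mathrm{secat}(\pi_k)$, $\mathrm{TC}^{G,\infty}(X)=\min_k\mathrm{TC}^{G,k}(X)$. $P^k_*(X)=\{(\gamma_1,\dots,\gamma_k)\in\mathcal{P}_k(X)\mid\gamma_1(0)=x_0\}$, $q_k(\gamma_1,\dots,\gamma_k)=\gamma_k(1)$, $\mathrm{cat}^{G,k}(X)=\mathrm{secat}(q_k)$, $\mathrm{cat}^{G,\infty}(X)=\min_k\mathrm{cat}^{G,k}(X)$. *)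

(* Defs.v *)
From HB Require Import structures.
From mathcomp Require Import all_boot all_order all_algebra.
From mathcomp Require Import all_classical all_reals topology.
From mathcomp Require Import Rstruct Rstruct_topology.
From Stdlib Require Import Rdefinitions.

Set Implicit Arguments.
Unset Strict Implicit.
Unset Printing Implicit Defensive.

Import Order.TTheory GRing.Theory Num.Theory.
Local Open Scope classical_set_scope.
Local Open Scope ring_scope.

Definition I01 : set R := [set t | (0 <= t <= 1)%R].

(** Infimum of a set of naturals in [option nat] (None = +infinity). *)
Lemma ex_asbool_nat (S : set nat) : (exists n, S n) -> exists n, `[< S n >].
Proof. by case=> n Sn; exists n; apply/asboolP. Qed.

Definition oinf (S : set nat) : option nat :=
  match pselect (exists n, S n) with
  | left h => Some (ex_minn (ex_asbool_nat h))
  | right _ => None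
  end.

Definition is_top_group_action (G X : topologicalType)
    (mul : G -> G -> G) (inv : G -> G) (one : G) (act : G -> X -> X) : Prop :=
  [/\ continuous (fun p : G * G => mul p.1 p.2),
      continuous inv,
      continuous (fun p : G * X => act p.1 p.2),
      [/\ forall a b c, mul a (mul b c) = mul (mul a b) c,
          forall a, mul one a = a &
          forall a, mul (inv a) a = one] &
      (forall x, act one x = x) /\
      (forall a b x, act (mul a b) x = act a (act b x))].

Definition same_orbit (G X : Type) (act : G -> X -> X) (x y : X) : Prop :=
  exists g, act g x = y.

(** [rho : X -> Q] is (a model of) the orbit map X -> X/G: a surjection whose
    fibres are exactly the G-orbits and Q carries the quotient topology. *)
Definition is_orbit_map (G X Q : topologicalType) (act : G -> X -> X)
    (rho : X -> Q) : Prop :=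
  [/\ forall q, exists x, rho x = q,
      forall x y, rho x = rho y <-> same_orbit act x y &
      forall V : set Q, open V <-> open (rho @^-1` V)].

(** ** Homotopies and homotopy sections (maps into path spaces are written in
    curried/adjoint form: a map U -> PX is a map U x [0,1] -> X continuous
    on U x [0,1]; [0,1] is locally compact Hausdorff, so this is the same as
    continuity into PX with the compact-open topology). *)

Definition htpy_on (Z Y : topologicalType) (U : set Z) (f g : Z -> Y) : Prop :=
  exists H : Z -> R -> Y,
    {within U `*` I01, continuous (fun z : Z * R => H z.1 z.2)} /\
    (forall b, U b -> H b 0 = f b /\ H b 1 = g b).

(** gam (indices 0..k-1) is a continuous map U -> P_k(X) where consecutive
    paths are glued along the relation [rel]: rel (gam_i(1)) (gam_{i+1}(0)). *)
Definition multipath_on (Z X : topologicalType) (rel : X -> X -> Prop)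
    (k : nat) (U : set Z) (gam : nat -> Z -> R -> X) : Prop :=
  (forall i, (leq i.+1 k) ->
     {within U `*` I01, continuous (fun z : Z * R => gam i z.1 z.2)}) /\
  (forall b, U b -> forall i, (leq i.+2 k) -> rel (gam i b 1) (gam i.+1 b 0)).

(** U admits a homotopy section of pi_k : P_k(X) -> X x X,
    (g_1..g_k) |-> (g_1(0), g_k(1)). *)
Definition pi_hsec (X : topologicalType) (rel : X -> X -> Prop) (k : nat)
    (U : set (X * X)) : Prop :=
  exists gam, multipath_on rel k U gam /\
    htpy_on U (fun z => (gam 0%N z 0, gam k.-1 z 1)) id.

(** U admits a homotopy section of q_k : P^k_*(X) -> X, (g_1..g_k) |-> g_k(1),
    where P^k_*(X) requires g_1(0) = x0. *)
Definition q_hsec (X : topologicalType) (rel : X -> X -> Prop) (x0 : X)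
    (k : nat) (U : set X) : Prop :=
  exists gam, multipath_on rel k U gam /\
    (forall z, U z -> gam 0%N z 0 = x0) /\
    htpy_on U (fun z => gam k.-1 z 1) id.

(** Reduced sectional category: least n such that the base is covered by
    n+1 open sets each admitting a homotopy section (None if there is none). *)
Definition secat_le (B : topologicalType) (hsec : set B -> Prop) (n : nat) :=
  exists U : 'I_n.+1 -> set B,
    (forall i, open (U i)) /\ (forall b, exists i, U i b) /\
    (forall i, hsec (U i)).

Definition secat (B : topologicalType) (hsec : set B -> Prop) : option nat :=
  oinf (secat_le hsec).

(** Ordinary (reduced) LS-category and topological complexity, as sectional
    categories of P_*(B) -> B and PB -> B x B (k = 1, no gluing). *)
Definition catLS (B : topologicalType) (b0 : B) : option nat :=
  secat (q_hsec (@eq B) b0 1).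
Definition TC (B : topologicalType) : option nat :=
  secat (pi_hsec (@eq B) 1).

Definition TCGk (G X : topologicalType) (act : G -> X -> X) (k : nat) :=
  secat (pi_hsec (same_orbit act) k).
Definition catGk (G X : topologicalType) (act : G -> X -> X) (x0 : X) (k : nat) :=
  secat (q_hsec (same_orbit act) x0 k).

Definition TCGinf (G X : topologicalType) (act : G -> X -> X) : option nat :=
  oinf [set n | exists k, (leq 1 k) /\ TCGk act k = Some n].
Definition catGinf (G X : topologicalType) (act : G -> X -> X) (x0 : X) :=
  oinf [set n | exists k, (leq 1 k) /\ catGk act x0 k = Some n].

(* Main.v *)
Require Import Defs.
From mathcomp Require Import all_boot all_order all_algebra.
From mathcomp Require Import all_classical all_reals topology.
From mathcomp Require Import normedtype Rstruct Rstruct_topology.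
From mathcomp Require Import ring lra.
From Stdlib Require Import Rdefinitions.
Set Implicit Arguments.
Unset Strict Implicit.
Unset Printing Implicit Defensive.
Import Order.TTheory GRing.Theory Num.Theory.
Local Open Scope classical_set_scope.
Local Open Scope ring_scope.

Lemma cont_pair (T U V : topologicalType) (f : T -> U) (g : T -> V) :
  continuous f -> continuous g -> continuous (fun x => (f x, g x)).
Proof. by move=> cf cg x; apply: cvg_pair; [exact: cf | exact: cg]. Qed.

Lemma cont_fst (T U : topologicalType) : continuous (@fst T U).
Proof. by move=> x; exact: cvg_fst. Qed.

Lemma cont_snd (T U : topologicalType) : continuous (@snd T U).
Proof. by move=> x; exact: cvg_snd. Qed.

Lemma cont_aff (a b : R) : continuous (fun t : R => a * t + b).
Proof.
move=> x.
have h1 := @mulrl_continuous _ a x.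
have h2 : (fun _ : R => b) @ nbhs x --> b by exact: cvg_cst.
have h1' : (fun t : R => a * t) @ nbhs x --> a * x by exact: h1.
have := @cvgD R R^o _ _ _ _ _ _ _ h1' h2. move=> H. exact: H.
Qed.

Lemma within_comp (T T' U : topologicalType) (A : set T) (B : set T')
  (phi : T -> T') (g : T' -> U) :
  continuous phi -> (forall x, A x -> B (phi x)) ->
  {within B, continuous g} -> {within A, continuous (g \o phi)}.
Proof.
move=> cphi AB /(@subspace_continuousP _ B) cg; apply/(@subspace_continuousP _ A) => x Ax.
have h : phi @ within A (nbhs x) --> within B (nbhs (phi x)).
  move=> P HP; have := cphi x (fun y => B y -> P y) HP.
  rewrite !nbhs_simpl /=. apply: filterS => y Py Ay; exact: Py (AB _ Ay).
exact: (cvg_comp _ _ h (cg _ (AB _ Ax))).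
Qed.

Lemma within_post (T U V : topologicalType) (A : set T) (f : T -> U) (h : U -> V) :
  {within A, continuous f} -> continuous h -> {within A, continuous (h \o f)}.
Proof.
move=> /(@subspace_continuousP _ A) cf ch; apply/(@subspace_continuousP _ A) => x Ax.
exact: (cvg_comp _ _ (cf _ Ax) (ch (f x))).
Qed.

Lemma paste_within (T U : topologicalType) (A C1 C2 : set T) (f : T -> U) :
  closed C1 -> closed C2 -> A `<=` C1 `|` C2 ->
  {within A `&` C1, continuous f} -> {within A `&` C2, continuous f} ->
  {within A, continuous f}.
Proof.
move=> cC1 cC2 AC h1 h2; apply/(@subspace_continuousP _ A) => x Ax.
have key : forall C, closed C -> {within A `&` C, continuous f} ->
    forall W, nbhs (f x) W -> nbhs x (fun y => A y -> C y -> W (f y)).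
  move=> C cC hC W Wx; case: (pselect (C x)) => Cx.
    have := (proj1 (@subspace_continuousP _ (A `&` C) _ _) hC x (conj Ax Cx) W Wx).
    rewrite !nbhs_simpl /= /within /= => H.
    by apply: (filterS _ H) => y Hy Ay Cy; exact: Hy.
  have oC : open (~` C) by exact: closed_openC.
  have : nbhs x (~` C) by apply: open_nbhs_nbhs; split.
  by apply: filterS => y nCy _ Cy; exfalso; exact: nCy.
move=> W Wx; rewrite !nbhs_simpl /= /within /=.
have := @filterI T (nbhs x) (nbhs_filter x) _ _ (key _ cC1 h1 W Wx) (key _ cC2 h2 W Wx).
move=> H; apply: (filterS _ H) => y [H1 H2] Ay.
by case: (AC y Ay) => Cy; [exact: H1 | exact: H2].
Qed.

Lemma two_halfK (K : realFieldType) : 2 * (2^-1 : K) = 1.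
Proof. by rewrite mulfV // pnatr_eq0. Qed.

Lemma ar_half (K : realFieldType) : ((0:K) <= 2^-1) /\ ((2^-1 : K) < 1) /\
  ((2 * 1 - 1 : K) = 1) /\ ((2 * 2^-1 + -1 : K) = 0).
Proof. have := two_halfK K; split; [lra|split; [lra|split; lra]]. Qed.

Lemma ar_lo (K : realFieldType) (t : K) : 0 <= t -> t <= 2^-1 ->
  0 <= 2 * t + 0 <= 1.
Proof. have := two_halfK K => *; apply/andP; split; lra. Qed.

Lemma ar_hi (K : realFieldType) (t : K) : 2^-1 <= t -> t <= 1 ->
  0 <= 2 * t + -1 <= 1.
Proof. have := two_halfK K => *; apply/andP; split; lra. Qed.

Lemma ar_rev (K : realFieldType) (t : K) : 0 <= t -> t <= 1 ->
  0 <= -1 * t + 1 <= 1.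
Proof. move=> *; apply/andP; split; lra. Qed.

Lemma ar_rev01 (K : realFieldType) : ((-1 * 0 + 1 : K) = 1) /\ ((-1 * 1 + 1 : K) = 0).
Proof. split; lra. Qed.

Lemma I01P (t : R) : I01 t <-> (0 <= t <= 1).
Proof.
split.
  by move=> [h0 h1]; apply/andP; split; apply/RleP.
by move=> /andP [h0 h1]; split; apply/RleP.
Qed.

Definition cc (Z Y : Type) (p q : Z -> R -> Y) (z : Z) (t : R) : Y :=
  if (t <= 2^-1) then p z (2 * t) else q z (2 * t - 1).

Lemma cc0 (Z Y : Type) (p q : Z -> R -> Y) z : cc p q z 0 = p z 0.
Proof. rewrite /cc ifT ?mulr0 //; exact: (ar_half R).1. Qed.

Lemma cc1 (Z Y : Type) (p q : Z -> R -> Y) z : cc p q z 1 = q z 1.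
Proof.
rewrite /cc ifF; last by apply/negbTE; rewrite -ltNge; exact: (ar_half R).2.1.
by rewrite (ar_half R).2.2.1.
Qed.

Lemma closed_snd_le (Z : topologicalType) (c : R) :
  closed [set z : Z * R | z.2 <= c].
Proof. exact: (proj1 (continuous_closedP (@snd Z R)) (@cont_snd Z R) _ (@closed_le R c)). Qed.

Lemma closed_snd_ge (Z : topologicalType) (c : R) :
  closed [set z : Z * R | c <= z.2].
Proof. exact: (proj1 (continuous_closedP (@snd Z R)) (@cont_snd Z R) _ (@closed_ge R c)). Qed.

Lemma cont_phi (Z : topologicalType) (a b : R) :
  continuous (fun z : Z * R => (z.1, a * z.2 + b)).
Proof.
apply: cont_pair; first exact: cont_fst.
move=> x; exact: (continuous_comp (@cont_snd Z R x) (@cont_aff a b x.2)).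
Qed.

Lemma cc_cont (Z Y : topologicalType) (V : set Z) (p q : Z -> R -> Y) :
  {within V `*` I01, continuous (fun z : Z * R => p z.1 z.2)} ->
  {within V `*` I01, continuous (fun z : Z * R => q z.1 z.2)} ->
  (forall b, V b -> p b 1 = q b 0) ->
  {within V `*` I01, continuous (fun z : Z * R => cc p q z.1 z.2)}.
Proof.
move=> cp cq seam.
apply: (@paste_within _ _ _ [set z : Z * R | z.2 <= 2^-1] [set z | 2^-1 <= z.2]).
- exact: closed_snd_le.
- exact: closed_snd_ge.
- move=> z _; have [h|h] := leP z.2 2^-1; [left | right] => //=.
  exact: ltW.
- apply: (@subspace_eq_continuous _ _ _
     (from_subspace _ ((fun z : Z * R => p z.1 z.2) \o (fun z : Z * R => (z.1, 2 * z.2 + 0))))).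
    move=> z /set_mem [_ /= h]; by rewrite /from_subspace /cc /= h addr0.
  apply: (@within_comp _ _ _ _ (V `*` I01) _ _ (@cont_phi Z 2 0)).
    move=> [z t] [[/= Vz It] /= th]; split => //=.
    move: It => /I01P /andP [t0 t1]; apply/I01P.
    exact: ar_lo.
  exact: cp.
- apply: (@subspace_eq_continuous _ _ _
     (from_subspace _ ((fun z : Z * R => q z.1 z.2) \o (fun z : Z * R => (z.1, 2 * z.2 + (-1)))))).
    move=> [z t] /set_mem [[/= Vz _] /= th]; rewrite /from_subspace /cc /=.
    case: ifP => h.
      have -> : t = 2^-1 by apply/eqP; rewrite eq_le h th.
      rewrite two_halfK.
      by rewrite seam // subrr.
    by [].
  apply: (@within_comp _ _ _ _ (V `*` I01) _ _ (@cont_phi Z 2 (-1))).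
    move=> [z t] [[/= Vz It] /= th]; split => //=.
    move: It => /I01P /andP [t0 t1]; apply/I01P.
    exact: ar_hi.
  exact: cq.
Qed.

Lemma chain_concat (Z Y : topologicalType) (V : set Z) :
  forall k (p : nat -> Z -> R -> Y), (0 < k)%nat ->
  (forall i, (i < k)%nat -> {within V `*` I01, continuous (fun z : Z * R => p i z.1 z.2)}) ->
  (forall b, V b -> forall i, (i.+1 < k)%nat -> p i b 1 = p i.+1 b 0) ->
  exists P : Z -> R -> Y,
    {within V `*` I01, continuous (fun z : Z * R => P z.1 z.2)} /\
    (forall b, V b -> P b 0 = p 0%nat b 0 /\ P b 1 = p k.-1 b 1).
Proof.
elim=> [//|k IH] p _ cp sp.
case: k IH cp sp => [|k] IH cp sp.
  by exists (p 0%nat); split; [exact: cp | by []].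
have [P [cP eP]] := IH (fun i => p i.+1) erefl (fun i hi => cp i.+1 hi)
  (fun b Vb i hi => sp b Vb i.+1 hi).
exists (cc (p 0%nat) P); split.
  apply: cc_cont => //; first exact: cp.
  by move=> b Vb; rewrite (proj1 (eP b Vb)); exact: sp.
by move=> b Vb; rewrite cc0 cc1 (proj2 (eP b Vb)).
Qed.

Lemma cont_map1 (Z Z' : topologicalType) (f : Z -> Z') :
  continuous f -> continuous (fun z : Z * R => (f z.1, z.2)).
Proof.
move=> cf; apply: cont_pair; last exact: cont_snd.
move=> x; exact: (continuous_comp (@cont_fst Z R x) (cf x.1)).
Qed.

Lemma cont_mapA (Z Z' : topologicalType) (f : Z -> Z') (a b : R) :
  continuous f -> continuous (fun z : Z * R => (f z.1, a * z.2 + b)).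
Proof.
move=> cf; apply: cont_pair.
  move=> x; exact: (continuous_comp (@cont_fst Z R x) (cf x.1)).
move=> x; exact: (continuous_comp (@cont_snd Z R x) (@cont_aff a b x.2)).
Qed.

Lemma cont_ss (Q X : topologicalType) (s : Q -> X) :
  continuous s -> continuous (fun q : Q * Q => (s q.1, s q.2)).
Proof.
move=> cs; apply: cont_pair => x.
  exact: (continuous_comp (@cont_fst Q Q x) (cs x.1)).
exact: (continuous_comp (@cont_snd Q Q x) (cs x.2)).
Qed.

Lemma cont_post1 (X Y : topologicalType) (s : X -> Y) :
  continuous s -> continuous (fun p : X * X => s p.1).
Proof. move=> cs x; exact: (continuous_comp (@cont_fst X X x) (cs x.1)). Qed.

Lemma cont_post2 (X Y : topologicalType) (s : X -> Y) :
  continuous s -> continuous (fun p : X * X => s p.2).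
Proof. move=> cs x; exact: (continuous_comp (@cont_snd X X x) (cs x.2)). Qed.

Lemma cont_cst (T U : topologicalType) (c : U) : continuous (fun _ : T => c).
Proof. by move=> x; exact: cvg_cst. Qed.

Lemma oinf_someE (S : set nat) n : oinf S = Some n -> S n /\ (forall m, S m -> (n <= m)%nat).
Proof.
rewrite /oinf; case: pselect => // h [<-].
case: ex_minnP => m /asboolP Sm hm; split => // k Sk; apply: hm; exact/asboolP.
Qed.

Lemma oinf_noneE (S : set nat) : oinf S = None -> forall n, ~ S n.
Proof. by rewrite /oinf; case: pselect => // h _ n Sn; apply: h; exists n. Qed.

Lemma oinf_eq (S : set nat) m : S m -> (forall n, S n -> (m <= n)%nat) -> oinf S = Some m.
Proof.
move=> Sm hm; rewrite /oinf; case: pselect => [h|h]; last by exfalso; apply: h; exists m.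
congr Some; case: ex_minnP => k /asboolP Sk hk.
by apply/eqP; rewrite eqn_leq hm //= hk //; apply/asboolP.
Qed.

Lemma oinf_none (S : set nat) : (forall n, ~ S n) -> oinf S = None.
Proof. by move=> h; rewrite /oinf; case: pselect => // -[n Sn]; case: (h n). Qed.

Lemma oinf_ex (S : set nat) n : S n -> exists m, oinf S = Some m /\ (m <= n)%nat.
Proof.
move=> Sn; case E : (oinf S) => [m|]; last by case: (oinf_noneE E Sn).
by exists m; split => //; apply: (oinf_someE E).2.
Qed.

Lemma final_eq (PX : nat -> nat -> Prop) (PQ : nat -> Prop) (K : nat) :
  (0 < K)%nat -> (forall k n, (0 < k)%nat -> PX k n -> PQ n) ->
  (forall n, PQ n -> PX K n) ->
  oinf [set n | exists k, (leq 1 k) /\ oinf (PX k) = Some n] = oinf PQ.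
Proof.
move=> K0 low up.
case E : (oinf PQ) => [m|].
  have [Qm mmin] := oinf_someE E.
  have [m' [E' le']] := oinf_ex (up _ Qm).
  have [Xm' _] := oinf_someE E'.
  have mm' : m' = m.
    by apply/eqP; rewrite eqn_leq le' mmin //; exact: (low K).
  apply: oinf_eq; first by exists K; split => //; rewrite E' mm'.
  move=> n [k [k1 Ek]]; apply: mmin; apply: (low k) => //.
  exact: (oinf_someE Ek).1.
apply: oinf_none => n [k [k1 Ek]].
exact: (oinf_noneE E) (low k n k1 (oinf_someE Ek).1).
Qed.
Lemma catLower (G X Q : topologicalType) (act : G -> X -> X) (x0 : X)
    (rho : X -> Q) (s : Q -> X) :
  (forall x y, rho x = rho y <-> same_orbit act x y) ->
  continuous rho -> continuous s -> (forall q, rho (s q) = q) ->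
  forall k n, (0 < k)%nat ->
  secat_le (q_hsec (same_orbit act) x0 k) n ->
  secat_le (q_hsec (@eq Q) (rho x0) 1) n.
Proof.
move=> Hiff crho cs rs k n k0 [U [oU [cov hs]]].
exists (fun i => s @^-1` U i); split; [|split].
- by move=> i; exact: (proj1 (continuousP s) cs _ (oU i)).
- by move=> b; have [i Ui] := cov (s b); exists i.
move=> i; have [gam [[cgam rgam] [g0 [H [cH eH]]]]] := hs i.
have [P [cP eP]] := @chain_concat Q Q (s @^-1` U i) k
  (fun j q t => rho (gam j (s q) t)) k0
  (fun j hj => within_post (within_comp (cont_map1 cs) (fun z Vz => Vz) (cgam j hj)) crho)
  (fun b Vb j hj => proj2 (Hiff _ _) (rgam (s b) Vb j hj)).
exists (fun _ => P); split; [split|split].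
- by move=> j _.
- by [].
- by move=> z Vz; rewrite (eP z Vz).1 /= g0.
exists (fun z t => rho (H (s z) t)); split.
  exact: (within_post (within_comp (cont_map1 cs) (fun z Vz => Vz) cH) crho).
move=> b Vb; have [e0 e1] := eH (s b) Vb; split.
  by rewrite /= e0 (eP b Vb).2.
by rewrite e1 rs.
Qed.

Lemma catUpper (G X Q : topologicalType) (act : G -> X -> X) (x0 : X)
    (rho : X -> Q) (s : Q -> X) :
  (forall x y, rho x = rho y <-> same_orbit act x y) ->
  continuous rho -> continuous s -> (forall q, rho (s q) = q) ->
  forall n, secat_le (q_hsec (@eq Q) (rho x0) 1) n ->
  secat_le (q_hsec (same_orbit act) x0 4) n.
Proof.
move=> Hiff crho cs rs n [V [oV [cov hs]]].
have orb : forall x y, rho x = rho y -> same_orbit act x y by move=> x y /Hiff.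
exists (fun i => rho @^-1` V i); split; [|split].
- by move=> i; exact: (proj1 (continuousP rho) crho _ (oV i)).
- by move=> b; have [i Vi] := cov (rho b); exists i.
move=> i; have [gam [[cgam _] [g0 [H [cH eH]]]]] := hs i.
exists (fun j x t => match j with
  | 0 => x0 | 1 => s (gam 0%nat (rho x) t) | 2 => s (H (rho x) t) | _ => x end).
split; [split|split].
- move=> [|[|[|j]]] hj.
  + by apply: continuous_subspaceT; exact: cont_cst.
  + exact: (within_post (within_comp (cont_map1 crho) (fun z Vz => Vz) (cgam 0%nat erefl)) cs).
  + exact: (within_post (within_comp (cont_map1 crho) (fun z Vz => Vz) cH) cs).
  + exact: continuous_subspaceT (@cont_fst X R).
- move=> b Vb [|[|[|j]]] // _.
  + by apply: orb; rewrite g0 // rs.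
  + by apply: orb; rewrite (eH _ Vb).1.
  + by apply: orb; rewrite (eH _ Vb).2 rs.
- by [].
exists (fun z _ => z); split.
  exact: continuous_subspaceT (@cont_fst X R).
by [].
Qed.

Lemma tcLower (G X Q : topologicalType) (act : G -> X -> X)
    (rho : X -> Q) (s : Q -> X) :
  (forall x y, rho x = rho y <-> same_orbit act x y) ->
  continuous rho -> continuous s -> (forall q, rho (s q) = q) ->
  forall k n, (0 < k)%nat ->
  secat_le (pi_hsec (same_orbit act) k) n ->
  secat_le (pi_hsec (@eq Q) 1) n.
Proof.
move=> Hiff crho cs rs k n k0 [U [oU [cov hs]]].
pose ss := fun q : Q * Q => (s q.1, s q.2).
pose rr := fun p : X * X => (rho p.1, rho p.2).
have css : continuous ss by exact: cont_ss.
have crr : continuous rr by exact: cont_ss.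
exists (fun i => ss @^-1` U i); split; [|split].
- by move=> i; exact: (proj1 (continuousP ss) css _ (oU i)).
- by move=> b; have [i Ui] := cov (ss b); exists i.
move=> i; have [gam [[cgam rgam] [H [cH eH]]]] := hs i.
have [P [cP eP]] := @chain_concat (Q * Q)%type Q (ss @^-1` U i) k
  (fun j q t => rho (gam j (ss q) t)) k0
  (fun j hj => within_post (within_comp (cont_map1 css) (fun z Vz => Vz) (cgam j hj)) crho)
  (fun b Vb j hj => proj2 (Hiff _ _) (rgam (ss b) Vb j hj)).
exists (fun _ => P); split; [split|].
- by move=> j _.
- by [].
exists (fun z t => rr (H (ss z) t)); split.
  exact: (within_post (within_comp (cont_map1 css) (fun z Vz => Vz) cH) crr).
move=> b Vb; have [e0 e1] := eH (ss b) Vb; split.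
  by rewrite /= e0 /rr /= (eP b Vb).1 (eP b Vb).2.
by rewrite e1 /rr /ss /= !rs; case: b {Vb e0 e1}.
Qed.

Lemma tcUpper (G X Q : topologicalType) (act : G -> X -> X)
    (rho : X -> Q) (s : Q -> X) :
  (forall x y, rho x = rho y <-> same_orbit act x y) ->
  continuous rho -> continuous s -> (forall q, rho (s q) = q) ->
  forall n, secat_le (pi_hsec (@eq Q) 1) n ->
  secat_le (pi_hsec (same_orbit act) 5) n.
Proof.
move=> Hiff crho cs rs n [V [oV [cov hs]]].
have orb : forall x y, rho x = rho y -> same_orbit act x y by move=> x y /Hiff.
pose rr := fun p : X * X => (rho p.1, rho p.2).
have crr : continuous rr by exact: cont_ss.
exists (fun i => rr @^-1` V i); split; [|split].
- by move=> i; exact: (proj1 (continuousP rr) crr _ (oV i)).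
- by move=> b; have [i Vi] := cov (rr b); exists i.
move=> i; have [gam [[cgam _] [H [cH eH]]]] := hs i.
exists (fun j x t => match j with
  | 0 => x.1 | 1 => s (H (rr x) (-1 * t + 1)).1 | 2 => s (gam 0%nat (rr x) t)
  | 3 => s (H (rr x) t).2 | _ => x.2 end).
split; [split|].
- move=> [|[|[|[|j]]]] hj.
  + exact: continuous_subspaceT (fun x => continuous_comp (@cont_fst (X * X)%type R x) (@cont_fst X X x.1)).
  + have := within_post (@within_comp _ _ _ _ (V i `*` I01) _ (fun z => H z.1 z.2) (@cont_mapA _ _ rr (-1) 1 crr) _ cH) (cont_post1 cs).
    apply => -[z t] [/= Vz /I01P /andP [t0 t1]]; split => //; apply/I01P; exact: ar_rev.
  + exact: (within_post (within_comp (cont_map1 crr) (fun z Vz => Vz) (cgam 0%nat erefl)) cs).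
  + exact: (within_post (within_comp (cont_map1 crr) (fun z Vz => Vz) cH) (cont_post2 cs)).
  + exact: continuous_subspaceT (fun x => continuous_comp (@cont_fst (X * X)%type R x) (@cont_snd X X x.1)).
- move=> b Vb [|[|[|[|j]]]] // _.
  + by apply: orb; rewrite (ar_rev01 R).1 (eH _ Vb).2 /rr /= rs.
  + by apply: orb; rewrite (ar_rev01 R).2 (eH _ Vb).1.
  + by apply: orb; rewrite (eH _ Vb).1.
  + by apply: orb; rewrite (eH _ Vb).2 /rr /= rs.
exists (fun z _ => z); split.
  exact: continuous_subspaceT (@cont_fst (X * X)%type R).
by move=> [b1 b2].
Qed.

Theorem mainTheorem8 (G X Q : topologicalType)
    (mul : G -> G -> G) (inv : G -> G) (one : G) (act : G -> X -> X)
    (x0 : X) (rho : X -> Q) (s : Q -> X) :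
  is_top_group_action mul inv one act ->
  is_orbit_map act rho ->
  continuous s -> (forall q, rho (s q) = q) ->
  catGinf act x0 = catLS (rho x0) /\ TCGinf act = TC Q.
Proof.
move=> _ [_ Hiff Hopen] cs rs.
have crho : continuous rho.
  by apply/continuousP => A oA; apply/Hopen.
split.
  rewrite /catGinf /catGk /catLS /secat.
  apply: (@final_eq _ _ 4) => //.
    by move=> k n k0; exact: (catLower Hiff crho cs rs k0).
  exact: (catUpper Hiff crho cs rs).
rewrite /TCGinf /TCGk /TC /secat.
apply: (@final_eq _ _ 5) => //.
  by move=> k n k0; exact: (tcLower Hiff crho cs rs k0).
exact: (tcUpper Hiff crho cs rs).
Qed.
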